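(* For distinct $a,b$, in $A(\mathcal{H}^+)$: $[E^u_{ba}]=[\bar E^u_{ba}]$, $[E^t_{ba}]=[\bar E^t_{ba}]$ and $[\Lambda_{ab}]=[\Lambda_{ba}]$.
   Context: $\mathfrak{h}$ is an $\ell$-dimensional complex space with orthonormal basis $h_1,\dots,h_\ell$; $\mathcal{H}=M(1,0)$ the free bosonic vertex operator algebra generated by Heisenberg modes $h(n)$ on vacuum $\mathbf{1}$; $\mathcal{H}^+$ the fixed points of the automorphism induced by $h\mapsto-h$; $A(\mathcal{H}^+)=\mathcal{H}^+/O(\mathcal{H}^+)$ Zhu's algebra ($O$ spanned by $u\circ v=\sum_{i\ge0}\binom{\mathrm{wt}\,u}{i}u_{i-2}v$, product induced by $u*v=\sum_{i\ge0}\binom{\mathrm{wt}\,u}{i}u_{i-1}v$), $[u]=u+O(\mathcal{H}^+)$. For distinct $a,b$ and $m\ge1$ let $S_{ab}(1,m)=h_a(-1)h_b(-m)\mathbf{1}$ and define $E^u_{ab}=5S_{ab}(1,2)+25S_{ab}(1,3)+36S_{ab}(1,4)+16S_{ab}(1,5)$, $\bar E^u_{ba}=S_{ab}(1,1)+14S_{ab}(1,2)+41S_{ab}(1,3)+44S_{ab}(1,4)+16S_{ab}(1,5)$, $E^t_{ab}=-16\big(3S_{ab}(1,2)+14S_{ab}(1,3)+19S_{ab}(1,4)+8S_{ab}(1,5)\big)$, $\bar E^t_{ba}=-16\big(5S_{ab}(1,2)+18S_{ab}(1,3)+21S_{ab}(1,4)+8S_{ab}(1,5)\big)$, $\Lambda_{ab}=45S_{ab}(1,2)+190S_{ab}(1,3)+240S_{ab}(1,4)+96S_{ab}(1,5)$;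 so $E^u_{ba}$, $E^t_{ba}$, $\Lambda_{ba}$ are given by the same formulas with $a$ and $b$ interchanged. *)

(* Defs.v *)
From HB Require Import structures.
From mathcomp Require Import all_boot all_order all_algebra.
From mathcomp Require Import algC.
Set Implicit Arguments. Unset Strict Implicit. Unset Printing Implicit Defensive.
Import Order.TTheory GRing.Theory Num.Theory.
Local Open Scope ring_scope.

Section FreeBoson.
Variable l : nat.

(* A monomial h_{a1}(-n1) ... h_{ar}(-nr) 1 is the word [:: (a1,n1); ...];
   the order of the letters is irrelevant (creation operators commute):
   words are compared up to permutation ([perm_eq]). *)
Definition mono := seq ('I_l * nat).
Definition vec := seq (algC * mono).

Definition coef (w : vec) (m : mono) : algC :=
  \sum_(x <- w | perm_eq x.2 m) x.1.
Definition veq (x y : vec) : Prop := forall m, coef x m = coef y m.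

Definition wf (w : vec) : bool := all (fun x => all (fun p => 0 < p.2)%N x.2) w.

Definition vadd (x y : vec) : vec := x ++ y.
Definition vscale (c : algC) (x : vec) : vec := [seq (c * t.1, t.2) | t <- x].
Definition vsub (x y : vec) : vec := x ++ vscale (-1) y.
Definition vsum (s : seq vec) : vec := flatten s.

Definition weight (m : mono) : nat := sumn [seq p.2 | p <- m].
Definition wtmax (w : vec) : nat := foldr maxn 0%N [seq weight t.2 | t <- w].

Definition create (a : 'I_l) (n : nat) (w : vec) : vec :=
  [seq (t.1, (a, n) :: t.2) | t <- w].
(* annihilation operator h_a(n), n >= 0 (h_a(0) = 0 on M(1,0));
   [h_a(n), h_b(-k)] = n delta_{ab} delta_{nk} *)
Definition annih (a : 'I_l) (n : nat) (w : vec) : vec :=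
  [seq (t.1 * (n * count_mem (a, n) t.2)%:R, rem (a, n) t.2) | t <- w].

(* Modes u_q of the vertex operator Y(u,z) = sum_q u_q z^{-q-1} of a monomial u,
   defined by the iterate (associativity) formula with a = h_a(-1)1:
   (h_a(-n) v)_q = sum_{i>=0} (-1)^i binom(-n,i)
        ( h_a(-n-i) v_(q+i) - (-1)^n v_(q-n-i) h_a(i) ),
   where (-1)^i binom(-n,i) = binom(n+i-1,i).  On a given vector w the sum is
   finite; it is truncated at i = wtmax w + wt v + |q|, beyond which all terms
   vanish (v_k w = 0 for k >= wt v + wt w, and h_a(i) w = 0 for i > wt w). *)
Fixpoint modeM (u : mono) (q : int) (w : vec) {struct u} : vec :=
  match u with
  | [::] => if q == (-1)%R then w else [::]
  | p :: v =>
      let a := p.1 in let n := p.2 in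
      vsum [seq vadd
               (vscale ('C(n + i - 1, i))%:R (create a (n + i) (modeM v (q + i%:Z) w)))
               (vscale (- ((-1) ^+ n * ('C(n + i - 1, i))%:R))
                       (modeM v (q - n%:Z - i%:Z) (annih a i w)))
           | i <- iota 0 (wtmax w + weight v + absz q).+1]
  end.

Definition vmode (u : vec) (q : int) (w : vec) : vec :=
  vsum [seq vscale t.1 (modeM t.2 q w) | t <- u].

(* the automorphism theta induced by h |-> -h *)
Definition theta (w : vec) : vec := [seq ((-1) ^+ size t.2 * t.1, t.2) | t <- w].

Definition inHplus (u : vec) : Prop := wf u /\ veq (theta u) u.

Definition homog (k : nat) (u : vec) : Prop :=
  forall m, coef u m != 0 -> weight m = k.

(* Zhu's product u o v = sum_{i>=0} binom(wt u, i) u_{i-2} v, for u of weight k *)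
Definition circ (k : nat) (u v : vec) : vec :=
  vsum [seq vscale ('C(k, i))%:R (vmode u (i%:Z - 2) v) | i <- iota 0 k.+1].

(* x lies in O(H^+): the span of u o v, u in H^+ homogeneous, v in H^+
   (scalars are absorbed in v) *)
Definition inO (x : vec) : Prop :=
  exists s : seq (nat * vec * vec),
    (forall t, t \in s -> [/\ inHplus t.1.2, homog t.1.1 t.1.2 & inHplus t.2]) /\
    veq x (vsum [seq circ t.1.1 t.1.2 t.2 | t <- s]).

Definition zhu_eq (x y : vec) : Prop := inO (vsub x y).

Definition S (a b : 'I_l) (m : nat) : vec := [:: (1, [:: (a, 1%N); (b, m)])].

Definition lc (a b : 'I_l) (cs : seq (nat * nat)) : vec :=
  vsum [seq vscale (c.2)%:R (S a b c.1) | c <- cs].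

Definition Eu (a b : 'I_l) : vec := lc a b [:: (2, 5); (3, 25); (4, 36); (5, 16)]%N.
(* \bar E^u_{ba} (expressed through S_{ab}) *)
Definition Eubar_ba (a b : 'I_l) : vec :=
  lc a b [:: (1, 1); (2, 14); (3, 41); (4, 44); (5, 16)]%N.
Definition Et (a b : 'I_l) : vec :=
  vscale (-16) (lc a b [:: (2, 3); (3, 14); (4, 19); (5, 8)]%N).
(* \bar E^t_{ba} (expressed through S_{ab}) *)
Definition Etbar_ba (a b : 'I_l) : vec :=
  vscale (-16) (lc a b [:: (2, 5); (3, 18); (4, 21); (5, 8)]%N).
Definition Lambda (a b : 'I_l) : vec :=
  lc a b [:: (2, 45); (3, 190); (4, 240); (5, 96)]%N.

End FreeBoson.

(* Main.v *)
Require Import Defs.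
From mathcomp Require Import all_boot all_order all_algebra algC.
Set Implicit Arguments. Unset Strict Implicit. Unset Printing Implicit Defensive.
Import Order.TTheory GRing.Theory Num.Theory.
Local Open Scope ring_scope.

Section Gen.
Variable R : pzRingType.
Variable l : nat.
Local Notation gvec := (seq (R * mono l)).

Definition vscaleg (c : R) (x : gvec) : gvec := [seq (c * t.1, t.2) | t <- x].
Definition wtmaxg (w : gvec) : nat := foldr maxn 0%N [seq weight t.2 | t <- w].
Definition createg (a : 'I_l) (n : nat) (w : gvec) : gvec :=
  [seq (t.1, (a, n) :: t.2) | t <- w].
Definition annihg (a : 'I_l) (n : nat) (w : gvec) : gvec :=
  [seq (t.1 * (n * count_mem (a, n) t.2)%:R, rem (a, n) t.2) | t <- w].
Fixpoint modeMg (u : mono l) (q : int) (w : gvec) {struct u} : gvec :=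
  match u with
  | [::] => if q == (-1)%R then w else [::]
  | p :: v =>
      let a := p.1 in let n := p.2 in
      flatten [seq 
               (vscaleg ('C(n + i - 1, i))%:R (createg a (n + i) (modeMg v (q + i%:Z) w)))
               ++
               (vscaleg (- ((-1) ^+ n * ('C(n + i - 1, i))%:R))
                       (modeMg v (q - n%:Z - i%:Z) (annihg a i w)))
           | i <- iota 0 (wtmaxg w + weight v + absz q).+1]
  end.
Definition vmodeg (u : gvec) (q : int) (w : gvec) : gvec :=
  flatten [seq vscaleg t.1 (modeMg t.2 q w) | t <- u].
Definition thetag (w : gvec) : gvec := [seq ((-1) ^+ size t.2 * t.1, t.2) | t <- w].
Definition circg (k : nat) (u v : gvec) : gvec :=
  flatten [seq vscaleg ('C(k, i))%:R (vmodeg u (i%:Z - 2) v) | i <- iota 0 k.+1].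
Definition vsubg (x y : gvec) : gvec := x ++ vscaleg (-1) y.
Definition Sg (a b : 'I_l) (m : nat) : gvec := [:: (1, [:: (a, 1%N); (b, m)])].
Definition lcg (a b : 'I_l) (cs : seq (nat * nat)) : gvec :=
  flatten [seq vscaleg (c.2)%:R (Sg a b c.1) | c <- cs].
Definition coefg (w : gvec) (m : mono l) : R :=
  \sum_(x <- w | perm_eq x.2 m) x.1.
End Gen.

Lemma modeM_g l u q w : modeM (l:=l) u q w = modeMg u q w.
Proof. reflexivity. Qed.
Lemma circ_g l k u v : circ (l:=l) k u v = circg k u v.
Proof. reflexivity. Qed.
Lemma theta_g l w : theta (l:=l) w = thetag w.
Proof. reflexivity. Qed.
Lemma vsub_g l x y : vsub (l:=l) x y = vsubg x y.
Proof. reflexivity. Qed.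
Lemma lc_g l a b cs : lc (l:=l) a b cs = lcg algC a b cs.
Proof. reflexivity. Qed.
Lemma vscale_g l c x : vscale (l:=l) c x = vscaleg c x.
Proof. reflexivity. Qed.
Lemma coef_g l x m : coef (l:=l) x m = coefg x m.
Proof. reflexivity. Qed.



Section Check.
Variable R : pzRingType.
Variable l : nat.
Fixpoint ins (k : mono l) (c : R) (L : seq (mono l * R)) : seq (mono l * R) :=
  match L with
  | [::] => [:: (k, c)]
  | f :: L' => if perm_eq f.1 k then (f.1, f.2 + c) :: L' else f :: ins k c L'
  end.
Definition lookup (L : seq (mono l * R)) (m : mono l) : R :=
  foldr (fun f acc => (if perm_eq f.1 m then f.2 else 0) + acc) 0 L.
Definition nf (x : seq (R * mono l)) := foldr (fun t L => ins t.2 t.1 L) [::] x.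
Definition vecEqb (x y : seq (R * mono l)) : bool :=
  let X := nf x in let Y := nf y in
  all (fun f => lookup X f.1 == lookup Y f.1) (X ++ Y).

Lemma lookup_ins k c L m :
  lookup (ins k c L) m = (if perm_eq k m then c else 0) + lookup L m.
Proof.
elim: L => [|f L IH] /=; first by rewrite /lookup /= addr0.
case: ifP => pfk /=.
  rewrite ((permPl pfk) m); case: (perm_eq k m); rewrite ?addr0 ?add0r //.
  by rewrite addrA [f.2 + c]addrC.
by rewrite IH addrCA.
Qed.

Lemma coefg_nf x m : coefg x m = lookup (nf x) m.
Proof.
elim: x => [|t x IH]; first by rewrite /coefg big_nil.
rewrite /coefg big_cons -/(coefg x m) IH /= lookup_ins.
by case: ifP; rewrite ?add0r.
Qed.

Lemma lookup_perm L k m : perm_eq k m -> lookup L k = lookup L m.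
Proof.
move=> pkm; elim: L => //= f L ->; by rewrite ((permPr pkm) f.1).
Qed.

Lemma lookup0 L m : (forall f, f \in L -> ~~ perm_eq f.1 m) -> lookup L m = 0.
Proof.
elim: L => //= f L IH H.
rewrite IH; last by move=> f' f'in; apply: H; rewrite in_cons f'in orbT.
by rewrite (negbTE (H f (mem_head _ _))) addr0.
Qed.

Lemma vecEqbP x y : vecEqb x y -> forall m, coefg x m = coefg y m.
Proof.
rewrite /vecEqb => /allP H m; rewrite !coefg_nf.
case: (boolP (has (fun f => perm_eq f.1 m) (nf x ++ nf y))).
  case/hasP => f fin pm.
  by rewrite -!(lookup_perm _ pm); apply/eqP/H.
move/hasPn => H0.
by rewrite !lookup0 // => f fin; apply: H0; rewrite mem_cat fin ?orbT.
Qed.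
End Check.

Definition wfg (R : pzRingType) l (w : seq (R * mono l)) : bool :=
  all (fun x => all (fun p => 0 < p.2)%N x.2) w.
Lemma wf_g l w : wf (l:=l) w = wfg w.
Proof. by []. Qed.

Section Map.
Variables (R S : pzRingType) (f : {rmorphism R -> S}) (k l : nat).
Variable g : 'I_k -> 'I_l.
Hypothesis injg : injective g.
Definition hp (p : 'I_k * nat) : 'I_l * nat := (g p.1, p.2).
Lemma hp_inj : injective hp.
Proof. by move=> [x n] [y m] /= [/injg -> ->]. Qed.
Definition Fm (m : mono k) : mono l := map hp m.
Definition Fv (w : seq (R * mono k)) : seq (S * mono l) := [seq (f t.1, Fm t.2) | t <- w].

Lemma weight_Fm m : weight (Fm m) = weight m.
Proof. by elim: m => //= p m; rewrite /weight /= => ->. Qed.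
Lemma wtmax_Fv w : wtmaxg (Fv w) = wtmaxg w.
Proof. by elim: w => //= t w; rewrite /wtmaxg /= weight_Fm => ->. Qed.
Lemma Fv_cat x y : Fv (x ++ y) = Fv x ++ Fv y.
Proof. exact: map_cat. Qed.
Lemma Fv_flatten s : Fv (flatten s) = flatten (map Fv s).
Proof. exact: map_flatten. Qed.
Lemma Fv_scale c x : Fv (vscaleg c x) = vscaleg (f c) (Fv x).
Proof. by elim: x => //= t x ->; rewrite rmorphM. Qed.
Lemma Fv_create a n w : Fv (createg a n w) = createg (g a) n (Fv w).
Proof. by elim: w => //= t w ->. Qed.
Lemma count_Fm a n m : count_mem (g a, n) (Fm m) = count_mem (a, n) m.
Proof.
elim: m => //= [[b j] m] IH; rewrite IH /=; congr (_ + _)%N.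
by rewrite !xpair_eqE (inj_eq injg).
Qed.
Lemma rem_Fm a n m : rem (g a, n) (Fm m) = Fm (rem (a, n) m).
Proof.
elim: m => //= [[b j] m] IH; rewrite /= !xpair_eqE (inj_eq injg).
by case: ifP => //= _; rewrite IH.
Qed.
Lemma Fv_annih a n w : Fv (annihg a n w) = annihg (g a) n (Fv w).
Proof.
elim: w => //= t w ->; rewrite rmorphM rmorph_nat count_Fm rem_Fm //.
Qed.

Lemma modeMg_cons (T : pzRingType) (p : 'I_k * nat) v q (w : seq (T * mono k)) :
  modeMg (p :: v) q w =
      flatten [seq 
               (vscaleg ('C(p.2 + i - 1, i))%:R (createg p.1 (p.2 + i) (modeMg v (q + i%:Z) w)))
               ++
               (vscaleg (- ((-1) ^+ p.2 * ('C(p.2 + i - 1, i))%:R))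
                       (modeMg v (q - p.2%:Z - i%:Z) (annihg p.1 i w)))
           | i <- iota 0 (wtmaxg w + weight v + absz q).+1].
Proof. by []. Qed.
Lemma modeMg_cons' (T : pzRingType) (p : 'I_l * nat) v q (w : seq (T * mono l)) :
  modeMg (p :: v) q w =
      flatten [seq 
               (vscaleg ('C(p.2 + i - 1, i))%:R (createg p.1 (p.2 + i) (modeMg v (q + i%:Z) w)))
               ++
               (vscaleg (- ((-1) ^+ p.2 * ('C(p.2 + i - 1, i))%:R))
                       (modeMg v (q - p.2%:Z - i%:Z) (annihg p.1 i w)))
           | i <- iota 0 (wtmaxg w + weight v + absz q).+1].
Proof. by []. Qed.

Lemma modeMg_Fv u q w : Fv (modeMg u q w) = modeMg (Fm u) q (Fv w).
Proof.
elim: u q w => [|[a n] v IH] q w; first by rewrite /=; case: ifP.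
rewrite modeMg_cons [Fm _]/= modeMg_cons'.
rewrite Fv_flatten -map_comp wtmax_Fv weight_Fm; congr flatten.
apply: eq_map => i /=.
rewrite Fv_cat !Fv_scale Fv_create !IH Fv_annih.
by rewrite rmorph_nat rmorphN rmorphM rmorphXn rmorphN1 rmorph_nat.
Qed.

Lemma vmodeg_Fv u q w : Fv (vmodeg u q w) = vmodeg (Fv u) q (Fv w).
Proof.
rewrite /vmodeg Fv_flatten -!map_comp; congr flatten; apply: eq_map => t /=.
by rewrite Fv_scale modeMg_Fv.
Qed.

Lemma circg_Fv n u v : Fv (circg n u v) = circg n (Fv u) (Fv v).
Proof.
rewrite /circg Fv_flatten -!map_comp; congr flatten; apply: eq_map => i /=.
by rewrite Fv_scale vmodeg_Fv rmorph_nat.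
Qed.

Lemma thetag_Fv w : Fv (thetag w) = thetag (Fv w).
Proof. by elim: w => //= t w ->; rewrite rmorphM rmorphXn rmorphN1 size_map. Qed.

Lemma vsubg_Fv x y : Fv (vsubg x y) = vsubg (Fv x) (Fv y).
Proof. by rewrite /vsubg Fv_cat Fv_scale rmorphN1. Qed.

Lemma lcg_Fv a b cs : Fv (lcg R a b cs) = lcg S (g a) (g b) cs.
Proof.
rewrite /lcg Fv_flatten -map_comp; congr flatten; apply: eq_map => c /=.
by rewrite rmorphM rmorph_nat rmorph1.
Qed.

Lemma wf_Fv w : wfg (Fv w) = wfg w.
Proof. by elim: w => //= t w; rewrite /wfg /= => ->; rewrite /Fm all_map. Qed.

Lemma coefg_Fv_img x m0 : coefg (Fv x) (Fm m0) = f (coefg x m0).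
Proof.
rewrite /coefg big_map rmorph_sum; apply: eq_bigl => t /=.
apply/idP/idP; first exact: (perm_map_inj hp_inj).
exact: perm_map.
Qed.

Lemma coefg_Fv0 x m : (forall t, t \in x -> ~~ perm_eq (Fm t.2) m) -> coefg (Fv x) m = 0.
Proof.
move=> H; rewrite /coefg big_map big_seq_cond big1 // => t /andP [tin pm].
by move: (H t tin); rewrite pm.
Qed.

Lemma veq_Fv x y : (forall m, coefg x m = coefg y m) ->
  forall m, coefg (Fv x) m = coefg (Fv y) m.
Proof.
move=> H m.
case: (boolP (has (fun t => perm_eq (Fm t.2) m) (x ++ y))).
  case/hasP => t _ pm.
  have E z : coefg (Fv z) m = coefg (Fv z) (Fm t.2).
    by rewrite /coefg; apply: eq_bigl => s; rewrite ((permPr pm) s.2).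
  by rewrite !E !coefg_Fv_img H.
move/hasPn => H0.
by rewrite !coefg_Fv0 // => t tin; apply: H0; rewrite mem_cat tin ?orbT.
Qed.
End Map.

Definition A0 : 'I_2 := ord0.
Definition B1 : 'I_2 := ord_max.
Definition mkq (s : bool) (n d : nat) : rat := (if s then -1 else 1) * n%:R / d%:R.

Definition W1 : seq (nat * seq (rat * mono 2) * seq (rat * mono 2)) :=
  [:: (2%N, [:: (1, [:: (A0, 1%N); (B1, 1%N)])], [:: (mkq true 1 2, [::])]);
     (2%N, [:: (1, [:: (A0, 1%N); (B1, 1%N)])], [:: (mkq true 8 3, [:: (A0, 1%N); (A0, 2%N)])]);
     (2%N, [:: (1, [:: (A0, 1%N); (A0, 1%N)])], [:: (mkq false 80 3, [:: (A0, 2%N); (B1, 1%N)])]);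
     (2%N, [:: (1, [:: (A0, 1%N); (A0, 1%N)])], [:: (mkq true 34 3, [:: (A0, 2%N); (B1, 2%N)])]);
     (2%N, [:: (1, [:: (A0, 1%N); (B1, 1%N)])], [:: (mkq true 20 1, [:: (A0, 1%N); (A0, 1%N)])]);
     (2%N, [:: (1, [:: (A0, 1%N); (A0, 1%N)])], [:: (mkq false 20 1, [:: (A0, 1%N); (B1, 1%N)])]);
     (2%N, [:: (1, [:: (A0, 1%N); (A0, 1%N)])], [:: (mkq false 10 1, [:: (A0, 1%N); (B1, 2%N)])]);
     (3%N, [:: (1, [:: (A0, 1%N); (A0, 2%N)])], [:: (mkq false 8 3, [:: (A0, 1%N); (B1, 2%N)])]);
     (2%N, [:: (1, [:: (A0, 1%N); (A0, 1%N)])], [:: (mkq false 68 3, [:: (A0, 3%N); (B1, 1%N)])]);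
     (2%N, [:: (1, [:: (A0, 1%N); (B1, 1%N)])], [:: (mkq false 52 3, [:: (A0, 2%N); (A0, 2%N)])]);
     (3%N, [:: (1, [:: (A0, 1%N); (A0, 2%N)])], [:: (mkq true 68 3, [:: (A0, 1%N); (B1, 1%N)])]);
     (3%N, [:: (1, [:: (A0, 1%N); (A0, 2%N)])], [:: (mkq true 52 3, [:: (A0, 2%N); (B1, 1%N)])]);
     (3%N, [:: (1, [:: (A0, 1%N); (B1, 2%N)])], [:: (mkq true 1 2, [::])]);
     (3%N, [:: (1, [:: (A0, 1%N); (B1, 2%N)])], [:: (mkq false 52 3, [:: (B1, 1%N); (B1, 1%N)])]);
     (2%N, [:: (1, [:: (A0, 1%N); (B1, 1%N)])], [:: (mkq false 68 3, [:: (B1, 1%N); (B1, 2%N)])]);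
     (2%N, [:: (1, [:: (A0, 1%N); (B1, 1%N)])], [:: (mkq false 20 1, [:: (B1, 2%N); (B1, 2%N)])]);
     (2%N, [:: (1, [:: (B1, 1%N); (B1, 1%N)])], [:: (mkq true 68 3, [:: (A0, 1%N); (B1, 2%N)])]);
     (2%N, [:: (1, [:: (B1, 1%N); (B1, 1%N)])], [:: (mkq true 20 1, [:: (A0, 2%N); (B1, 2%N)])]);
     (3%N, [:: (1, [:: (A0, 1%N); (B1, 2%N)])], [:: (mkq false 8 3, [:: (A0, 1%N); (A0, 2%N)])]);
     (3%N, [:: (1, [:: (A0, 1%N); (B1, 2%N)])], [:: (mkq false 20 1, [:: (B1, 1%N); (B1, 2%N)])]);
     (3%N, [:: (1, [:: (A0, 2%N); (B1, 1%N)])], [:: (mkq false 1 2, [::])]);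
     (3%N, [:: (1, [:: (B1, 1%N); (B1, 2%N)])], [:: (mkq true 52 3, [:: (A0, 1%N); (B1, 1%N)])]);
     (3%N, [:: (1, [:: (B1, 1%N); (B1, 2%N)])], [:: (mkq true 20 1, [:: (A0, 1%N); (B1, 2%N)])]);
     (4%N, [:: (1, [:: (A0, 2%N); (A0, 2%N)])], [:: (mkq true 8 3, [:: (A0, 1%N); (B1, 1%N)])]);
     (4%N, [:: (1, [:: (A0, 2%N); (B1, 2%N)])], [:: (mkq true 8 3, [:: (A0, 1%N); (A0, 1%N)])])].

Definition W2 : seq (nat * seq (rat * mono 2) * seq (rat * mono 2)) :=
  [:: (2%N, [:: (1, [:: (A0, 1%N); (B1, 1%N)])], [:: (mkq false 32 3, [:: (A0, 1%N); (A0, 2%N)])]);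
     (2%N, [:: (1, [:: (A0, 1%N); (A0, 1%N)])], [:: (mkq true 112 1, [:: (A0, 2%N); (B1, 1%N)])]);
     (2%N, [:: (1, [:: (A0, 1%N); (A0, 1%N)])], [:: (mkq false 136 3, [:: (A0, 2%N); (B1, 2%N)])]);
     (2%N, [:: (1, [:: (A0, 1%N); (B1, 1%N)])], [:: (mkq false 208 3, [:: (A0, 1%N); (A0, 1%N)])]);
     (2%N, [:: (1, [:: (A0, 1%N); (A0, 1%N)])], [:: (mkq true 208 3, [:: (A0, 1%N); (B1, 1%N)])]);
     (2%N, [:: (1, [:: (A0, 1%N); (A0, 1%N)])], [:: (mkq true 104 3, [:: (A0, 1%N); (B1, 2%N)])]);
     (3%N, [:: (1, [:: (A0, 1%N); (A0, 2%N)])], [:: (mkq true 32 3, [:: (A0, 1%N); (B1, 2%N)])]);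
     (2%N, [:: (1, [:: (A0, 1%N); (A0, 1%N)])], [:: (mkq true 272 3, [:: (A0, 3%N); (B1, 1%N)])]);
     (2%N, [:: (1, [:: (A0, 1%N); (B1, 1%N)])], [:: (mkq true 208 3, [:: (A0, 2%N); (A0, 2%N)])]);
     (3%N, [:: (1, [:: (A0, 1%N); (A0, 2%N)])], [:: (mkq false 304 3, [:: (A0, 1%N); (B1, 1%N)])]);
     (3%N, [:: (1, [:: (A0, 1%N); (A0, 2%N)])], [:: (mkq false 208 3, [:: (A0, 2%N); (B1, 1%N)])]);
     (3%N, [:: (1, [:: (A0, 1%N); (B1, 2%N)])], [:: (mkq true 176 3, [:: (B1, 1%N); (B1, 1%N)])]);
     (2%N, [:: (1, [:: (A0, 1%N); (B1, 1%N)])], [:: (mkq true 304 3, [:: (B1, 1%N); (B1, 2%N)])]);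
     (2%N, [:: (1, [:: (A0, 1%N); (B1, 1%N)])], [:: (mkq true 80 1, [:: (B1, 2%N); (B1, 2%N)])]);
     (2%N, [:: (1, [:: (B1, 1%N); (B1, 1%N)])], [:: (mkq false 304 3, [:: (A0, 1%N); (B1, 2%N)])]);
     (2%N, [:: (1, [:: (B1, 1%N); (B1, 1%N)])], [:: (mkq false 80 1, [:: (A0, 2%N); (B1, 2%N)])]);
     (3%N, [:: (1, [:: (A0, 1%N); (B1, 2%N)])], [:: (mkq true 32 3, [:: (A0, 1%N); (A0, 2%N)])]);
     (3%N, [:: (1, [:: (A0, 1%N); (B1, 2%N)])], [:: (mkq true 80 1, [:: (B1, 1%N); (B1, 2%N)])]);
     (3%N, [:: (1, [:: (A0, 2%N); (B1, 1%N)])], [:: (mkq true 32 3, [:: (A0, 1%N); (A0, 1%N)])]);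
     (3%N, [:: (1, [:: (B1, 1%N); (B1, 2%N)])], [:: (mkq false 176 3, [:: (A0, 1%N); (B1, 1%N)])]);
     (3%N, [:: (1, [:: (B1, 1%N); (B1, 2%N)])], [:: (mkq false 80 1, [:: (A0, 1%N); (B1, 2%N)])]);
     (4%N, [:: (1, [:: (A0, 2%N); (A0, 2%N)])], [:: (mkq false 32 3, [:: (A0, 1%N); (B1, 1%N)])]);
     (4%N, [:: (1, [:: (A0, 2%N); (B1, 2%N)])], [:: (mkq false 32 3, [:: (A0, 1%N); (A0, 1%N)])])].

Definition W3 : seq (nat * seq (rat * mono 2) * seq (rat * mono 2)) :=
  [:: (2%N, [:: (1, [:: (A0, 1%N); (A0, 1%N)])], [:: (mkq true 8 1, [:: (A0, 2%N); (B1, 1%N)])]);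
     (2%N, [:: (1, [:: (A0, 1%N); (B1, 1%N)])], [:: (mkq true 16 1, [:: (A0, 1%N); (A0, 1%N)])]);
     (2%N, [:: (1, [:: (A0, 1%N); (A0, 1%N)])], [:: (mkq false 16 1, [:: (A0, 1%N); (B1, 1%N)])]);
     (2%N, [:: (1, [:: (A0, 1%N); (A0, 1%N)])], [:: (mkq false 8 1, [:: (A0, 1%N); (B1, 2%N)])]);
     (3%N, [:: (1, [:: (A0, 1%N); (A0, 2%N)])], [:: (mkq false 16 1, [:: (A0, 1%N); (B1, 1%N)])]);
     (3%N, [:: (1, [:: (A0, 1%N); (B1, 2%N)])], [:: (mkq true 1 1, [::])]);
     (3%N, [:: (1, [:: (A0, 1%N); (B1, 2%N)])], [:: (mkq false 16 1, [:: (B1, 1%N); (B1, 1%N)])]);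
     (2%N, [:: (1, [:: (A0, 1%N); (B1, 1%N)])], [:: (mkq true 16 1, [:: (B1, 1%N); (B1, 2%N)])]);
     (2%N, [:: (1, [:: (B1, 1%N); (B1, 1%N)])], [:: (mkq false 16 1, [:: (A0, 1%N); (B1, 2%N)])]);
     (3%N, [:: (1, [:: (A0, 2%N); (B1, 1%N)])], [:: (mkq false 1 1, [::])]);
     (3%N, [:: (1, [:: (A0, 2%N); (B1, 1%N)])], [:: (mkq true 16 1, [:: (A0, 1%N); (A0, 1%N)])]);
     (3%N, [:: (1, [:: (B1, 1%N); (B1, 2%N)])], [:: (mkq true 16 1, [:: (A0, 1%N); (B1, 1%N)])])].


Definition rhs (W : seq (nat * seq (rat * mono 2) * seq (rat * mono 2))) :=
  flatten [seq circg t.1.1 t.1.2 t.2 | t <- W].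
Definition T1 : seq (rat * mono 2) :=
  vsubg (lcg rat B1 A0 [:: (2, 5); (3, 25); (4, 36); (5, 16)]%N)
        (lcg rat A0 B1 [:: (1, 1); (2, 14); (3, 41); (4, 44); (5, 16)]%N).
Definition T2 : seq (rat * mono 2) :=
  vsubg (vscaleg (-16) (lcg rat B1 A0 [:: (2, 3); (3, 14); (4, 19); (5, 8)]%N))
        (vscaleg (-16) (lcg rat A0 B1 [:: (2, 5); (3, 18); (4, 21); (5, 8)]%N)).
Definition T3 : seq (rat * mono 2) :=
  vsubg (lcg rat A0 B1 [:: (2, 45); (3, 190); (4, 240); (5, 96)]%N)
        (lcg rat B1 A0 [:: (2, 45); (3, 190); (4, 240); (5, 96)]%N).
Lemma chk3 : vecEqb T3 (rhs W3). Proof. vm_compute. reflexivity. Qed.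
Lemma chk1 : vecEqb T1 (rhs W1). Proof. vm_compute. reflexivity. Qed.
Lemma chk2 : vecEqb T2 (rhs W2). Proof. vm_compute. reflexivity. Qed.


Lemma homog_of l k (w : vec l) : all (fun t => weight t.2 == k) w -> homog k w.
Proof.
move=> /allP H m Hne.
case: (eqVneq (weight m) k) => // Hw; exfalso.
move/eqP: Hne; apply; rewrite coef_g /coefg.
rewrite big_seq_cond big1 // => t /andP [tin pm].
move: (H t tin); rewrite (_ : weight t.2 = weight m) ?(negbTE Hw) //.
by rewrite /weight; apply: perm_sumn; apply: perm_map.
Qed.

Definition okW (W : seq (nat * seq (rat * mono 2) * seq (rat * mono 2))) : bool :=
  all (fun t => [&& wfg t.1.2, vecEqb (thetag t.1.2) t.1.2,
                  all (fun s => weight s.2 == t.1.1) t.1.2,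
                  wfg t.2 & vecEqb (thetag t.2) t.2]) W.

Lemma ok1 : okW W1. Proof. by vm_compute. Qed.
Lemma ok2 : okW W2. Proof. by vm_compute. Qed.
Lemma ok3 : okW W3. Proof. by vm_compute. Qed.

Section Main.
Variables (l : nat) (a b : 'I_l).
Hypothesis hab : a != b.
Definition gab (i : 'I_2) : 'I_l := if i == A0 then a else b.
Lemma ord2 (i : 'I_2) : i = A0 \/ i = B1.
Proof.
case: i => [[|[|n]] Hi]; [left|right|by []]; exact: val_inj.
Qed.
Lemma gA : gab A0 = a. Proof. by rewrite /gab eqxx. Qed.
Lemma gB : gab B1 = b. Proof. by []. Qed.
Lemma gab_inj : injective gab.
Proof.
move=> i j; case: (ord2 i) => ->; case: (ord2 j) => ->; rewrite ?gA ?gB //.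
  by move=> E; move: hab; rewrite E eqxx.
by move=> E; move: hab; rewrite E eqxx.
Qed.

Lemma Hp_Fv (u : seq (rat * mono 2)) :
  wfg u -> vecEqb (thetag u) u -> inHplus (Fv ratr gab u).
Proof.
move=> wu tu; split; first by rewrite wf_g wf_Fv.
move=> m; rewrite theta_g !coef_g -thetag_Fv.
apply: veq_Fv; first exact: gab_inj.
exact: vecEqbP.
Qed.

Lemma zhu_of X Y (TX TY : seq (rat * mono 2)) W :
  X = Fv ratr gab TX -> Y = Fv ratr gab TY -> okW W ->
  vecEqb (vsubg TX TY) (rhs W) -> zhu_eq X Y.
Proof.
move=> -> -> /allP okw eqb.
exists [seq (t.1.1, Fv ratr gab t.1.2, Fv ratr gab t.2) | t <- W]; split.
  move=> t /mapP [[[k u] v] tin ->] /=.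
  have /and5P [wu tu hu wv tv] := okw _ tin.
  split; [exact: Hp_Fv | | exact: Hp_Fv].
  apply: homog_of; rewrite /Fv all_map; apply: sub_all hu => s /=.
  by rewrite weight_Fm.
move=> m; rewrite vsub_g coef_g -vsubg_Fv.
have -> : vsum [seq circ t.1.1 t.1.2 t.2
               | t <- [seq (t.1.1, Fv ratr gab t.1.2, Fv ratr gab t.2) | t <- W]]
          = Fv ratr gab (rhs W).
  rewrite /rhs Fv_flatten -!map_comp; congr flatten; apply: eq_map => t /=.
  by rewrite circg_Fv //; apply: gab_inj.
rewrite coef_g; apply: veq_Fv; first exact: gab_inj.
exact: vecEqbP.
Qed.
End Main.

Theorem lemma5p1p1 (l : nat) (a b : 'I_l) (hab : a != b) :
  [/\ zhu_eq (Eu b a) (Eubar_ba a b),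
      zhu_eq (Et b a) (Etbar_ba a b)
    & zhu_eq (Lambda a b) (Lambda b a)].
Proof.
split.
- apply: (zhu_of hab (W := W1) (TX := lcg rat B1 A0 [:: (2, 5); (3, 25); (4, 36); (5, 16)]%N)
     (TY := lcg rat A0 B1 [:: (1, 1); (2, 14); (3, 41); (4, 44); (5, 16)]%N)).
  + by rewrite lcg_Fv gA gB.
  + by rewrite lcg_Fv gA gB.
  + exact: ok1.
  + exact: chk1.
- apply: (zhu_of hab (W := W2)
     (TX := vscaleg (-16) (lcg rat B1 A0 [:: (2, 3); (3, 14); (4, 19); (5, 8)]%N))
     (TY := vscaleg (-16) (lcg rat A0 B1 [:: (2, 5); (3, 18); (4, 21); (5, 8)]%N))).
  + by rewrite Fv_scale lcg_Fv gA gB rmorphN rmorph_nat.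
  + by rewrite Fv_scale lcg_Fv gA gB rmorphN rmorph_nat.
  + exact: ok2.
  + exact: chk2.
- apply: (zhu_of hab (W := W3)
     (TX := lcg rat A0 B1 [:: (2, 45); (3, 190); (4, 240); (5, 96)]%N)
     (TY := lcg rat B1 A0 [:: (2, 45); (3, 190); (4, 240); (5, 96)]%N)).
  + by rewrite lcg_Fv gA gB.
  + by rewrite lcg_Fv gA gB.
  + exact: ok3.
  + exact: chk3.
Qed.
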